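(* For every $\boldsymbol{\Delta}^0_2$ set $A\subseteq2^\omega$ there is a set $B\subseteq2^\omega$ with $B\equiv_W A$ such that $B$ is dualistic and $B=\Phi(C)=\Phi(U)$ for some closed set $C$ and some open set $U$.
   Context: $2^\omega$ is the Cantor space; $N_s=\{x:s\subset x\}$; $\mu$ the coin-tossing measure with $\mu(N_s)=2^{-\mathrm{lh}(s)}$. For measurable $A$ and $x\in2^\omega$, the density of $x$ in $A$ is $\mathcal D_A(x)=\lim_n\mu(A\cap N_{x\restriction n})/\mu(N_{x\restriction n})$ when the limit exists; $\Phi(A)=\{x:\mathcal D_A(x)=1\}$. A measurable set $B$ is dualistic if for every $x\in2^\omega$, $\mathcal D_B(x)$ exists and equals $0$ or $1$. $\boldsymbol{\Delta}^0_2$: sets both $F_\sigma$ and $G_\delta$. $X\equiv_W Y$ iff each is the preimage of the other under some continuous map $2^\omega\to2^\omega$. *)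

(* Defs.v *)
From Stdlib Require Import Reals Lra List ClassicalEpsilon.
Open Scope R_scope.

Definition cantor := nat -> bool.
Definition cset := cantor -> Prop.

Definition prefix (x : cantor) (n : nat) : list bool := map x (seq 0 n).

Definition N (s : list bool) : cset :=
  fun x => forall i, (i < length s)%nat -> x i = nth i s false.

Definition inter (A B : cset) : cset := fun x => A x /\ B x.
Definition compl (A : cset) : cset := fun x => ~ A x.

(* a countable cover by basic sets; None means "no set" *)
Definition cover_weight (c : nat -> option (list bool)) (k : nat) : R :=
  match c k with Some s => (/2) ^ (length s) | None => 0 end.

Definition covers (A : cset) (c : nat -> option (list bool)) : Prop :=
  forall x, A x -> exists k s, c k = Some s /\ N s x.

Definition cover_sums (A : cset) : R -> Prop :=
  fun r => exists c, covers A c /\ infinite_sum (cover_weight c) r.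

Definition is_glb (E : R -> Prop) (m : R) : Prop :=
  (forall r, E r -> m <= r) /\ (forall b, (forall r, E r -> b <= r) -> b <= m).

(* mu A = inf of the total weights of covers of A by basic sets;
   this is the outer measure extending mu(N_s) = 2^{-lh s}, and it agrees
   with the coin-tossing measure on measurable sets. *)
Definition mu (A : cset) : R :=
  epsilon (inhabits 0) (fun m => is_glb (cover_sums A) m).

Definition measurable (A : cset) : Prop :=
  forall E, mu E = mu (inter E A) + mu (inter E (compl A)).

Definition density (A : cset) (x : cantor) (d : R) : Prop :=
  Un_cv (fun n => mu (inter A (N (prefix x n))) / mu (N (prefix x n))) d.

Definition Phi (A : cset) : cset := fun x => density A x 1.

Definition dualistic (B : cset) : Prop :=
  measurable B /\ forall x, density B x 0 \/ density B x 1.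

Definition open (U : cset) : Prop :=
  forall x, U x -> exists n, forall y, N (prefix x n) y -> U y.
Definition closed (C : cset) : Prop := open (compl C).

Definition F_sigma (A : cset) : Prop :=
  exists F : nat -> cset, (forall k, closed (F k)) /\ (forall x, A x <-> exists k, F k x).
Definition G_delta (A : cset) : Prop :=
  exists G : nat -> cset, (forall k, open (G k)) /\ (forall x, A x <-> forall k, G k x).
Definition Delta02 (A : cset) : Prop := F_sigma A /\ G_delta A.

Definition set_eq (A B : cset) : Prop := forall x, A x <-> B x.

Definition continuous (f : cantor -> cantor) : Prop :=
  forall x n, exists m, forall y, (forall i, (i < m)%nat -> y i = x i) ->
    forall i, (i < n)%nat -> f y i = f x i.

Definition wadge_le (X Y : cset) : Prop :=
  exists f, continuous f /\ forall x, X x <-> Y (f x).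

Definition wadge_eq (X Y : cset) : Prop := wadge_le X Y /\ wadge_le Y X.

(* Main.v *)
Require Import Defs.
From Stdlib Require Import Reals List.
From Stdlib Require Import Lra Lia ClassicalEpsilon Classical FunctionalExtensionality.
Import Defs.
Import ListNotations.

Open Scope R_scope.

Definition w (s : list bool) : R := (/2) ^ (length s).

Lemma w_pos s : 0 < w s.
Proof. unfold w. apply pow_lt. lra. Qed.

Lemma cw_nonneg c k : 0 <= cover_weight c k.
Proof. unfold cover_weight. destruct (c k); [left; apply w_pos | lra]. Qed.

Lemma infsum_cv f l : infinite_sum f l <-> Un_cv (fun n => sum_f_R0 f n) l.
Proof. split; intros H; exact H. Qed.

Lemma cv_const (M : R) : Un_cv (fun _ => M) M.
Proof. intros e He. exists 0%nat. intros. unfold R_dist. rewrite Rminus_diag, Rabs_R0. lra. Qed.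

Lemma psum_le f l n : infinite_sum f l -> (forall k, 0 <= f k) -> sum_f_R0 f n <= l.
Proof. intros H Hp. apply sum_incr; auto. Qed.

Lemma infsum_nonneg f l : infinite_sum f l -> (forall k, 0 <= f k) -> 0 <= l.
Proof. intros H Hp. eapply Rle_trans; [apply (cond_pos_sum f 0 Hp)|]. apply psum_le; auto. Qed.

Lemma growing_psum f : (forall k, 0 <= f k) -> Un_growing (fun n => sum_f_R0 f n).
Proof. intros Hp n. simpl. specialize (Hp (S n)). lra. Qed.

Lemma bounded_lim f M : (forall k, 0 <= f k) -> (forall n, sum_f_R0 f n <= M) ->
  exists l, infinite_sum f l /\ l <= M.
Proof.
  intros Hp HM.
  destruct (growing_cv (fun n => sum_f_R0 f n)) as [l Hl].
  - apply growing_psum; auto.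
  - exists M. intros r [i ->]. apply HM.
  - exists l. split; [exact Hl|]. eapply Rle_cv_lim; [| exact Hl | apply cv_const]. exact HM.
Qed.

Lemma cover_sums_nonempty A : exists r, cover_sums A r.
Proof.
  exists 1. exists (fun k => match k with O => Some nil | _ => None end). split.
  - intros x _. exists 0%nat, nil. split; [reflexivity|]. intros i Hi. simpl in Hi. lia.
  - intros e He. exists 0%nat. intros n _.
    assert (sum_f_R0 (cover_weight (fun k => match k with O => Some nil | _ => None end)) n = 1) as ->.
    { induction n; simpl. unfold cover_weight, w. simpl. reflexivity.
      rewrite IHn. unfold cover_weight. lra. }
    unfold R_dist. rewrite Rminus_diag, Rabs_R0. lra.
Qed.

Lemma cover_sums_nonneg A r : cover_sums A r -> 0 <= r.
Proof. intros [c [_ H]]. eapply infsum_nonneg; eauto. apply cw_nonneg. Qed.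

Lemma glb_exists A : exists m, is_glb (cover_sums A) m.
Proof.
  destruct (cover_sums_nonempty A) as [r0 Hr0].
  destruct (completeness (fun r => cover_sums A (- r))) as [m [Hm1 Hm2]].
  - exists 0. intros r Hr. apply cover_sums_nonneg in Hr. lra.
  - exists (- r0). rewrite Ropp_involutive. exact Hr0.
  - exists (- m). split.
    + intros r Hr. assert (- r <= m). { apply Hm1. rewrite Ropp_involutive. exact Hr. } lra.
    + intros b Hb. assert (m <= - b). { apply Hm2. intros r Hr. specialize (Hb _ Hr). lra. } lra.
Qed.

Lemma mu_spec A : is_glb (cover_sums A) (mu A).
Proof.
  unfold mu. apply epsilon_spec. apply glb_exists.
Qed.

Lemma mu_nonneg A : 0 <= mu A.
Proof.
  destruct (mu_spec A) as [_ H]. apply H. apply cover_sums_nonneg.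
Qed.

Lemma mu_le_cover A c r : covers A c -> infinite_sum (cover_weight c) r -> mu A <= r.
Proof. intros H1 H2. destruct (mu_spec A) as [H _]. apply H. exists c; auto. Qed.

Lemma mu_le_bound A c M : covers A c -> (forall n, sum_f_R0 (cover_weight c) n <= M) -> mu A <= M.
Proof.
  intros Hc HM. destruct (bounded_lim (cover_weight c) M) as [l [Hl HlM]]; auto.
  apply cw_nonneg. eapply Rle_trans; [eapply mu_le_cover; eauto | exact HlM].
Qed.

Lemma mu_approx A e : 0 < e -> exists c r, covers A c /\ infinite_sum (cover_weight c) r /\ r < mu A + e.
Proof.
  intros He. apply NNPP. intros Hn.
  destruct (mu_spec A) as [_ H2].
  assert (mu A + e <= mu A). { apply H2. intros r [c [Hc Hr]]. apply Rnot_lt_le. intros Hlt. apply Hn. eauto. }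
  lra.
Qed.

Lemma mu_mono (A A' : cset) : (forall x, A x -> A' x) -> mu A <= mu A'.
Proof.
  intros Hs. destruct (mu_spec A') as [_ H2]. apply H2. intros r [c [Hc Hr]].
  eapply mu_le_cover; eauto. intros x Hx. apply Hc, Hs, Hx.
Qed.

Lemma mu_ext (A A' : cset) : (forall x, A x <-> A' x) -> mu A = mu A'.
Proof. intros H. apply Rle_antisym; apply mu_mono; intros; apply H; auto. Qed.

Definition interl (c1 c2 : nat -> option (list bool)) (n : nat) : option (list bool) :=
  if Nat.even n then c1 (Nat.div2 n) else c2 (Nat.div2 n).

Lemma interl_sum c1 c2 m :
  sum_f_R0 (cover_weight (interl c1 c2)) (S (2 * m)) =
  sum_f_R0 (cover_weight c1) m + sum_f_R0 (cover_weight c2) m.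
Proof.
  induction m.
  - simpl. unfold cover_weight, interl. simpl. ring.
  - replace (S (2 * S m)) with (S (S (S (2 * m)))) by lia.
    do 2 rewrite tech5. rewrite IHm. simpl sum_f_R0.
    unfold cover_weight, interl.
    replace (Nat.even (S (S (2 * m)))) with true.
    replace (Nat.even (S (S (S (2 * m))))) with false.
    replace (Nat.div2 (S (S (2 * m)))) with (S m).
    replace (Nat.div2 (S (S (S (2 * m))))) with (S m). ring.
    + replace (S (S (S (2 * m)))) with (S (2 * S m)) by lia. rewrite Nat.div2_succ_double. reflexivity.
    + replace (S (S (2 * m))) with (2 * S m)%nat by lia. rewrite Nat.div2_double. reflexivity.
    + replace (S (S (S (2 * m)))) with (S (2 * S m)) by lia. rewrite Nat.even_succ, Nat.odd_mul. reflexivity.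
    + replace (S (S (2 * m))) with (2 * S m)%nat by lia. rewrite Nat.even_mul. reflexivity.
Qed.

Lemma mu_union (P Q : cset) : mu (fun x => P x \/ Q x) <= mu P + mu Q.
Proof.
  apply Rnot_lt_le. intros Hlt.
  set (e := (mu (fun x => P x \/ Q x) - (mu P + mu Q)) / 3).
  assert (He : 0 < e) by (unfold e; lra).
  destruct (mu_approx P e He) as [c1 [r1 [Hc1 [Hr1 Hl1]]]].
  destruct (mu_approx Q e He) as [c2 [r2 [Hc2 [Hr2 Hl2]]]].
  assert (mu (fun x => P x \/ Q x) <= r1 + r2).
  { apply (mu_le_bound _ (interl c1 c2)).
    - intros x [Hx|Hx].
      + destruct (Hc1 x Hx) as [k [s [Hk Hs]]]. exists (2 * k)%nat, s. split; auto.
        unfold interl. rewrite Nat.even_mul, Nat.div2_double. exact Hk.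
      + destruct (Hc2 x Hx) as [k [s [Hk Hs]]]. exists (S (2 * k))%nat, s. split; auto.
        unfold interl. rewrite Nat.even_succ, Nat.odd_mul, Nat.div2_succ_double. exact Hk.
    - intros n. apply Rle_trans with (sum_f_R0 (cover_weight (interl c1 c2)) (S (2 * n))).
      + assert (forall a b, (a <= b)%nat -> sum_f_R0 (cover_weight (interl c1 c2)) a <= sum_f_R0 (cover_weight (interl c1 c2)) b).
        { intros a b Hab. induction Hab. lra. simpl. pose proof (cw_nonneg (interl c1 c2) (S m)). lra. }
        apply H. lia.
      + rewrite interl_sum. pose proof (psum_le _ _ n Hr1 (cw_nonneg c1)).
        pose proof (psum_le _ _ n Hr2 (cw_nonneg c2)). lra. }
  unfold e in *. lra.
Qed.

Open Scope R_scope.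

Definition ow (o : option (list bool)) : R := match o with Some s => w s | None => 0 end.
Definition wsum (l : list (list bool)) : R := fold_right (fun s acc => w s + acc) 0 l.
Definition owsum (l : list (option (list bool))) : R := fold_right (fun o acc => ow o + acc) 0 l.

Lemma ow_nonneg o : 0 <= ow o.
Proof. destruct o; simpl; [left; apply w_pos|lra]. Qed.

Lemma wsum_app l1 l2 : wsum (l1 ++ l2) = wsum l1 + wsum l2.
Proof. induction l1; simpl; [ring| rewrite IHl1; ring]. Qed.
Lemma owsum_app l1 l2 : owsum (l1 ++ l2) = owsum l1 + owsum l2.
Proof. induction l1; simpl; [ring| rewrite IHl1; ring]. Qed.
Lemma wsum_nonneg l : 0 <= wsum l.
Proof. induction l; simpl; [lra|]. pose proof (w_pos a). lra. Qed.
Lemma owsum_nonneg l : 0 <= owsum l.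
Proof. induction l; simpl; [lra|]. pose proof (ow_nonneg a). lra. Qed.
Lemma owsum_map l : owsum (map Some l) = wsum l.
Proof. induction l; simpl; [ring| rewrite IHl; ring]. Qed.

Lemma sum_zero n : sum_f_R0 (fun _ => 0) n = 0.
Proof. induction n; simpl; [ring| rewrite IHn; ring]. Qed.

Lemma psum_nth_le (l : list (option (list bool))) n : sum_f_R0 (fun k => ow (nth k l None)) n <= owsum l.
Proof.
  revert n. induction l as [|o l IH]; intros n.
  - rewrite (sum_eq _ (fun _ => 0)). rewrite sum_zero. simpl. lra.
    intros i _. destruct i; reflexivity.
  - destruct n.
    + simpl. pose proof (owsum_nonneg l). lra.
    + rewrite decomp_sum by lia. simpl pred. simpl. specialize (IH n). lra.
Qed.

Lemma mu_list (A : cset) l : (forall x, A x -> exists s, In s l /\ N s x) -> mu A <= wsum l.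
Proof.
  intros H. apply (mu_le_bound A (fun k => nth k (map Some l) None)).
  - intros x Hx. destruct (H x Hx) as [s [Hin Hs]].
    destruct (In_nth _ _ nil Hin) as [k [Hk1 Hk2]]. exists k, s. split; auto.
    rewrite (nth_indep _ None (Some nil)) by (rewrite length_map; auto).
    rewrite map_nth, Hk2. reflexivity.
  - intros n. rewrite <- owsum_map. apply psum_nth_le.
Qed.

Lemma mu_N_le s : mu (N s) <= w s.
Proof.
  replace (w s) with (wsum (s :: nil)) by (simpl; ring).
  apply mu_list. intros x Hx. exists s. split; simpl; auto.
Qed.

Lemma mu_empty (A : cset) : (forall x, ~ A x) -> mu A = 0.
Proof.
  intros H. apply Rle_antisym; [|apply mu_nonneg].
  replace 0 with (wsum nil) by reflexivity. apply mu_list. intros x Hx. exfalso; eapply H; eauto.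
Qed.

Open Scope R_scope.

Fixpoint prefixb (a t : list bool) : bool :=
  match a, t with
  | [], _ => true
  | _ :: _, [] => false
  | x :: a', y :: t' => Bool.eqb x y && prefixb a' t'
  end.

Definition cwt (a t : list bool) : R :=
  if prefixb a t then w t else if prefixb t a then w a else 0.

Lemma w_cons b t : w (b :: t) = / 2 * w t.
Proof. reflexivity. Qed.

Lemma w_snoc t b : w (t ++ [b]) = / 2 * w t.
Proof. unfold w. rewrite length_app, pow_add. simpl. ring. Qed.

Lemma w_nil : w [] = 1.
Proof. reflexivity. Qed.

Lemma half_pow_anti n m : (n <= m)%nat -> (/2) ^ m <= (/2) ^ n.
Proof.
  intros H. induction H; [lra|]. simpl. assert (0 < (/2)^m) by (apply pow_lt; lra). lra.
Qed.

Lemma prefixb_len a t : prefixb a t = true -> (length a <= length t)%nat.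
Proof.
  revert t; induction a; intros t H; simpl; [lia|]. destruct t; simpl in H; [discriminate|].
  apply andb_prop in H. destruct H. apply IHa in H0. simpl. lia.
Qed.

Lemma w_anti a t : (length a <= length t)%nat -> w t <= w a.
Proof. intros; apply half_pow_anti; auto. Qed.

Lemma cwt_nil_r a : cwt a [] = w a.
Proof. unfold cwt. destruct a; simpl; reflexivity. Qed.

Lemma cwt_nil_l t : cwt [] t = w t.
Proof. reflexivity. Qed.

Lemma cwt_cons x a y t : cwt (x :: a) (y :: t) = if Bool.eqb x y then / 2 * cwt a t else 0.
Proof.
  unfold cwt. simpl. destruct x, y; simpl; try reflexivity;
  destruct (prefixb a t), (prefixb t a); try reflexivity; ring.
Qed.

Lemma cwt_split t a : cwt a t = cwt a (t ++ [false]) + cwt a (t ++ [true]).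
Proof.
  revert a. induction t as [|y t IH]; intros a.
  - destruct a as [|x a].
    + rewrite !cwt_nil_l. unfold cwt, w. simpl. field.
    + rewrite cwt_nil_r. simpl app. rewrite !cwt_cons, !cwt_nil_r.
      destruct x; simpl; rewrite w_cons; ring.
  - destruct a as [|x a].
    + rewrite !cwt_nil_l. rewrite !w_snoc. field.
    + simpl app. rewrite !cwt_cons. destruct (Bool.eqb x y); [rewrite (IH a); ring | ring].
Qed.

Lemma cwt_nonneg a t : 0 <= cwt a t.
Proof. unfold cwt. destruct (prefixb a t); [left; apply w_pos|]. destruct (prefixb t a); [left; apply w_pos| lra]. Qed.

Lemma cwt_le a t : cwt a t <= w a.
Proof.
  unfold cwt. destruct (prefixb a t) eqn:E; [apply w_anti, prefixb_len; auto|].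
  destruct (prefixb t a); [lra|]. left; apply w_pos.
Qed.

Lemma N_cons b a x : N (b :: a) x <-> x 0%nat = b /\ N a (fun i => x (S i)).
Proof.
  unfold N. split.
  - intros H. split; [apply (H 0%nat); simpl; lia|]. intros i Hi. apply (H (S i)). simpl; lia.
  - intros [H0 H] i Hi. destruct i; simpl; auto. apply H. simpl in Hi; lia.
Qed.

Lemma prefixb_N a t x : N a x -> N t x -> (length a <= length t)%nat -> prefixb a t = true.
Proof.
  revert t x. induction a as [|b a IH]; intros t x Ha Ht Hl; [reflexivity|].
  destruct t as [|y t]; simpl in Hl; [lia|].
  apply N_cons in Ha, Ht. destruct Ha as [Ha1 Ha2]. destruct Ht as [Ht1 Ht2].
  simpl. apply andb_true_intro. split.
  - rewrite <- Ha1, <- Ht1. destruct (x 0%nat); reflexivity.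
  - eapply IH; eauto. lia.
Qed.

Lemma term_le_psum f k : (forall j, 0 <= f j) -> f k <= sum_f_R0 f k.
Proof.
  intros H. destruct k; simpl; [lra|]. pose proof (cond_pos_sum f k H). lra.
Qed.

Section LowerBound.
Variable s : list bool.
Variable c : nat -> option (list bool).
Variable r : R.
Hypothesis Hc : covers (N s) c.
Hypothesis Hr : infinite_sum (cover_weight c) r.

Definition ft (t : list bool) (k : nat) : R :=
  match c k with Some a => cwt a t | None => 0 end.

Lemma ft_bounds t k : 0 <= ft t k <= cover_weight c k.
Proof.
  unfold ft, cover_weight. destruct (c k); [split; [apply cwt_nonneg| apply cwt_le] | lra].
Qed.

Lemma ft_cv t : exists l, infinite_sum (ft t) l /\ l <= r.
Proof.
  destruct (Rseries_CV_comp (ft t) (cover_weight c) (ft_bounds t) (exist _ r Hr)) as [l Hl].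
  exists l. split; [exact Hl|]. eapply Rle_cv_lim; [|exact Hl|exact Hr].
  intros n. apply sum_Rle. intros; apply ft_bounds.
Qed.

Definition good (t : list bool) : Prop := exists l, infinite_sum (ft t) l /\ l < w t.

Lemma good_split t : good t -> good (t ++ [false]) \/ good (t ++ [true]).
Proof.
  intros [l [Hl Hlt]].
  destruct (ft_cv (t ++ [false])) as [l0 [H0 _]].
  destruct (ft_cv (t ++ [true])) as [l1 [H1 _]].
  assert (Hs : Un_cv (fun n => sum_f_R0 (ft t) n) (l0 + l1)).
  { eapply Un_cv_ext; [| apply (CV_plus _ _ _ _ H0 H1)].
    intros n. simpl. rewrite <- sum_plus. apply sum_eq. intros i _.
    unfold ft. destruct (c i); [rewrite <- cwt_split|]; ring. }
  assert (l = l0 + l1) by (eapply UL_sequence; eauto).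
  assert (w t = / 2 * w t + / 2 * w t) by field.
  destruct (Rlt_dec l0 (/2 * w t)).
  - left. exists l0. rewrite w_snoc. auto.
  - right. exists l1. rewrite w_snoc. split; auto. lra.
Qed.

Fixpoint path (n : nat) : list bool :=
  match n with
  | O => s
  | S n => let p := path n in
           if excluded_middle_informative (good (p ++ [false])) then p ++ [false] else p ++ [true]
  end.

Lemma path_good n : good s -> good (path n).
Proof.
  intros H. induction n; simpl; auto.
  destruct (excluded_middle_informative _); auto.
  destruct (good_split _ IHn); tauto.
Qed.

Lemma path_len n : length (path n) = (length s + n)%nat.
Proof.
  induction n; simpl; [lia|]. destruct (excluded_middle_informative _); rewrite length_app; simpl; lia.
Qed.

Lemma path_pref n m : (n <= m)%nat -> exists t, path m = path n ++ t.
Proof.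
  intros H. induction H.
  - exists []. rewrite app_nil_r; auto.
  - destruct IHle as [t Ht]. simpl. destruct (excluded_middle_informative _);
    [exists (t ++ [false]) | exists (t ++ [true])]; rewrite Ht, app_assoc; auto.
Qed.

Definition px (i : nat) : bool := nth i (path (S i)) false.

Lemma px_N n : N (path n) px.
Proof.
  intros i Hi. unfold px.
  destruct (path_pref n (Nat.max n (S i))) as [t1 H1]; [lia|].
  destruct (path_pref (S i) (Nat.max n (S i))) as [t2 H2]; [lia|].
  assert (nth i (path n ++ t1) false = nth i (path (S i) ++ t2) false) by (rewrite <- H1, <- H2; auto).
  rewrite !app_nth1 in H; auto. rewrite path_len; lia.
Qed.

Lemma lower_bound : w s <= r.
Proof.
  apply Rnot_lt_le. intros Hlt.
  assert (Hg : good s).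
  { destruct (ft_cv s) as [l [Hl Hle]]. exists l. split; auto. lra. }
  destruct (Hc px (px_N 0)) as [k [a [Hk Ha]]].
  set (t := path (length a)).
  destruct (path_good (length a) Hg) as [l [Hl Hlt2]].
  assert (ft t k = w t).
  { unfold ft. rewrite Hk. unfold cwt. rewrite (prefixb_N a t px Ha (px_N _)); auto.
    unfold t. rewrite path_len. lia. }
  pose proof (term_le_psum (ft t) k (fun j => proj1 (ft_bounds t j))).
  pose proof (psum_le (ft t) l k Hl (fun j => proj1 (ft_bounds t j))).
  fold t in Hlt2. lra.
Qed.
End LowerBound.

Lemma mu_N s : mu (N s) = w s.
Proof.
  apply Rle_antisym; [apply mu_N_le|].
  destruct (mu_spec (N s)) as [_ H]. apply H. intros r [c [Hc Hr]].
  eapply lower_bound; eauto.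
Qed.

Open Scope R_scope.

Section Flat.
Variable L : nat -> list (list bool).
Definition GL (k : nat) : list (option (list bool)) := None :: map Some (L k).
Definition FL (m : nat) : list (option (list bool)) := concat (map GL (seq 0 m)).
Definition flat (n : nat) : option (list bool) := nth n (FL (S n)) None.

Lemma FL_S m : FL (S m) = FL m ++ GL m.
Proof. unfold FL. rewrite seq_S, map_app, concat_app. simpl. rewrite app_nil_r. reflexivity. Qed.

Lemma FL_len m : (m <= length (FL m))%nat.
Proof. induction m; [simpl; lia|]. rewrite FL_S, length_app. simpl. lia. Qed.

Lemma FL_pref m m' : (m <= m')%nat -> exists r, FL m' = FL m ++ r.
Proof.
  intros H; induction H. exists []; rewrite app_nil_r; auto.
  destruct IHle as [r Hr]. exists (r ++ GL m0). rewrite FL_S, Hr, app_assoc. auto.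
Qed.

Lemma FL_stable n m m' : (n < length (FL m))%nat -> (m <= m')%nat -> nth n (FL m') None = nth n (FL m) None.
Proof. intros H1 H2. destruct (FL_pref m m' H2) as [r ->]. apply app_nth1; auto. Qed.

Lemma flat_cover k s : In s (L k) -> exists n, flat n = Some s.
Proof.
  intros Hin. destruct (In_nth _ _ [] Hin) as [p [Hp1 Hp2]].
  set (q := (length (FL k) + S p)%nat).
  assert (Hq : nth q (FL (S k)) None = Some s).
  { rewrite FL_S, app_nth2 by (unfold q; lia). unfold q. replace (length (FL k) + S p - length (FL k))%nat with (S p) by lia.
    unfold GL. simpl. rewrite (nth_indep _ None (Some [])) by (rewrite length_map; auto).
    rewrite map_nth, Hp2. reflexivity. }
  exists q. unfold flat. rewrite (FL_stable q (S k) (S q)); auto.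
  - rewrite FL_S, length_app. unfold GL. simpl. rewrite length_map. unfold q. lia.
  - pose proof (FL_len k). unfold q. lia.
Qed.

Lemma owsum_FL m : owsum (FL (S m)) = sum_f_R0 (fun k => wsum (L k)) m.
Proof.
  induction m.
  - unfold FL, GL. simpl. rewrite app_nil_r. simpl. rewrite owsum_map. simpl. ring.
  - rewrite FL_S, owsum_app, IHm. simpl. unfold GL. simpl. rewrite owsum_map. ring.
Qed.

Lemma flat_psum n : sum_f_R0 (cover_weight flat) n <= sum_f_R0 (fun k => wsum (L k)) n.
Proof.
  rewrite <- owsum_FL. eapply Rle_trans; [| apply (psum_nth_le (FL (S n)) n)].
  apply sum_Rle. intros i Hi. unfold cover_weight, flat. fold (ow (nth i (FL (S i)) None)).
  destruct (Nat.lt_ge_cases i (length (FL (S i)))).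
  - rewrite (FL_stable i (S i) (S n)); [apply Rle_refl | auto | lia].
  - rewrite nth_overflow by auto. simpl. apply ow_nonneg.
Qed.
End Flat.

Lemma geom_sum n : sum_f_R0 (fun k => (/2) ^ (S k)) n = 1 - (/2) ^ (S n).
Proof. induction n; simpl in *; [field|]. rewrite IHn. field. Qed.

Lemma meas_crit (B : cset) :
  (forall a e, 0 < e -> exists L1 L2,
     (forall x, N a x -> B x -> exists s, In s L1 /\ N s x) /\
     (forall x, N a x -> ~ B x -> exists s, In s L2 /\ N s x) /\
     wsum L1 + wsum L2 <= w a + e) -> measurable B.
Proof.
  intros Hcrit E. apply Rle_antisym.
  - eapply Rle_trans; [| apply mu_union]. apply mu_mono. intros x Hx.
    destruct (classic (B x)); [left|right]; split; auto.
  - apply Rnot_lt_le. intros Hlt.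
    set (eps := (mu (inter E B) + mu (inter E (compl B)) - mu E) / 3).
    assert (Heps : 0 < eps) by (unfold eps; lra).
    destruct (mu_approx E eps Heps) as [c [r [Hc [Hr Hrl]]]].
    set (P := fun k (p : list (list bool) * list (list bool)) =>
      match c k with
      | Some a => (forall x, N a x -> B x -> exists s, In s (fst p) /\ N s x) /\
                  (forall x, N a x -> ~ B x -> exists s, In s (snd p) /\ N s x) /\
                  wsum (fst p) + wsum (snd p) <= w a + eps * (/2) ^ (S k)
      | None => fst p = [] /\ snd p = []
      end).
    assert (HP : forall k, exists p, P k p).
    { intros k. unfold P. destruct (c k) as [a|].
      - destruct (Hcrit a (eps * (/2) ^ (S k))) as [L1 [L2 H]].
        + apply Rmult_lt_0_compat; auto. apply pow_lt; lra.
        + exists (L1, L2). exact H.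
      - exists ([], []). auto. }
    set (pick := fun k => epsilon (inhabits ([] : list (list bool), [] : list (list bool))) (P k)).
    assert (Hpick : forall k, P k (pick k)) by (intros k; apply epsilon_spec, HP).
    set (L1 := fun k => fst (pick k)). set (L2 := fun k => snd (pick k)).
    assert (Hsum : forall n, sum_f_R0 (fun k => wsum (L1 k) + wsum (L2 k)) n <= r + eps).
    { intros n. eapply Rle_trans with (sum_f_R0 (fun k => cover_weight c k + eps * (/2) ^ (S k)) n).
      - apply sum_Rle. intros k _. specialize (Hpick k). unfold P in Hpick. unfold L1, L2, cover_weight.
        destruct (c k); [apply Hpick|]. destruct Hpick as [-> ->]. simpl. pose proof (pow_lt (/2) (S k)). 
        assert (0 < /2) by (apply Rinv_0_lt_compat; lra). specialize (H H0). change (/2 * (/2)^k) with ((/2)^(S k)). rewrite !Rplus_0_l. left. apply Rmult_lt_0_compat; auto.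
      - rewrite sum_plus. pose proof (psum_le _ _ n Hr (cw_nonneg c)).
        assert (sum_f_R0 (fun k => eps * (/2) ^ (S k)) n = eps * (1 - (/2) ^ (S n))).
        { rewrite <- geom_sum. clear. induction n; [simpl; ring|]. rewrite !tech5, IHn. ring. }
        rewrite H0. pose proof (pow_lt (/2) (S n)). assert (0 < /2) by (apply Rinv_0_lt_compat; lra). specialize (H1 H2). nra. }
    destruct (bounded_lim (fun k => wsum (L1 k)) (r + eps)) as [l1 [Hl1 _]].
    { intros; apply wsum_nonneg. }
    { intros n. eapply Rle_trans; [|apply (Hsum n)]. rewrite sum_plus.
      pose proof (cond_pos_sum (fun k => wsum (L2 k)) n (fun k => wsum_nonneg _)). lra. }
    destruct (bounded_lim (fun k => wsum (L2 k)) (r + eps)) as [l2 [Hl2 _]].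
    { intros; apply wsum_nonneg. }
    { intros n. eapply Rle_trans; [|apply (Hsum n)]. rewrite sum_plus.
      pose proof (cond_pos_sum (fun k => wsum (L1 k)) n (fun k => wsum_nonneg _)). lra. }
    assert (Hl12 : l1 + l2 <= r + eps).
    { eapply Rle_cv_lim; [exact Hsum| |apply cv_const].
      eapply Un_cv_ext; [|apply (CV_plus _ _ _ _ Hl1 Hl2)]. intros n. simpl. rewrite sum_plus. reflexivity. }
    assert (H1 : mu (inter E B) <= l1).
    { apply (mu_le_bound _ (flat L1)).
      - intros x [HE HB]. destruct (Hc x HE) as [k [a [Hk Ha]]].
        specialize (Hpick k). unfold P in Hpick. rewrite Hk in Hpick.
        destruct Hpick as [Hp1 _]. destruct (Hp1 x Ha HB) as [s [Hs1 Hs2]].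
        destruct (flat_cover L1 k s Hs1) as [n Hn]. exists n, s. auto.
      - intros n. eapply Rle_trans; [apply flat_psum|]. apply psum_le; auto. intros; apply wsum_nonneg. }
    assert (H2 : mu (inter E (compl B)) <= l2).
    { apply (mu_le_bound _ (flat L2)).
      - intros x [HE HB]. destruct (Hc x HE) as [k [a [Hk Ha]]].
        specialize (Hpick k). unfold P in Hpick. rewrite Hk in Hpick.
        destruct Hpick as [_ [Hp2 _]]. destruct (Hp2 x Ha HB) as [s [Hs1 Hs2]].
        destruct (flat_cover L2 k s Hs1) as [n Hn]. exists n, s. auto.
      - intros n. eapply Rle_trans; [apply flat_psum|]. apply psum_le; auto. intros; apply wsum_nonneg. }
    unfold eps in *. lra.
Qed.

Open Scope R_scope.
Open Scope nat_scope.

Definition pad (i : nat) : bool := negb (Nat.eqb (2 ^ Nat.log2 (S i)) (S i)).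

Lemma pow2_pos k : (1 <= 2 ^ k)%nat.
Proof. pose proof (Nat.pow_nonzero 2 k). lia. Qed.

Lemma data_pos k : pad (2 ^ k - 1) = false.
Proof.
  unfold pad. pose proof (pow2_pos k). replace (S (2 ^ k - 1)) with (2 ^ k) by lia.
  rewrite Nat.log2_pow2 by lia. rewrite Nat.eqb_refl. reflexivity.
Qed.

Lemma data_char i : pad i = false -> S i = 2 ^ Nat.log2 (S i).
Proof. unfold pad. intros H. apply Bool.negb_false_iff, Nat.eqb_eq in H. lia. Qed.

Lemma pad_exists n : exists p, (n <= p)%nat /\ pad p = true.
Proof.
  exists (2 ^ (n + 2) - 2)%nat. split.
  - pose proof (Nat.pow_gt_lin_r 2 (n+2) ltac:(lia)). lia.
  - unfold pad. apply Bool.negb_true_iff, Nat.eqb_neq.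
    assert (H2 : (2 ^ (n + 2) = 2 * 2 ^ (n + 1))%nat) by (rewrite <- Nat.pow_succ_r'; f_equal; lia).
    pose proof (pow2_pos (n + 1)).
    assert (2 <= 2 ^ (n+1))%nat by (rewrite Nat.add_1_r, Nat.pow_succ_r'; pose proof (pow2_pos n); lia).
    rewrite (Nat.log2_unique (S (2 ^ (n + 2) - 2)) (n + 1)); [lia| lia |].
    replace (S (n + 1)) with (n + 2)%nat by lia. lia.
Qed.

Fixpoint firstv (f : nat -> bool) (n : nat) : option nat :=
  match n with
  | O => None
  | S n => match firstv f n with
           | Some i => Some i
           | None => if andb (pad n) (f n) then Some n else None
           end
  end.

Definition fv (f : nat -> bool) (i : nat) : Prop :=
  pad i = true /\ f i = true /\ forall j, (j < i)%nat -> pad j = true -> f j = false.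

Lemma firstv_ext f g n : (forall i, (i < n)%nat -> f i = g i) -> firstv f n = firstv g n.
Proof.
  induction n; intros H; simpl; auto. rewrite IHn by (intros; apply H; lia).
  rewrite (H n) by lia. reflexivity.
Qed.

Lemma firstv_None f n : firstv f n = None <-> forall i, (i < n)%nat -> pad i = true -> f i = false.
Proof.
  induction n; simpl.
  - split; auto. intros; lia.
  - destruct (firstv f n) eqn:E.
    + split; [discriminate|]. intros H. exfalso.
      assert (forall i, (i < n)%nat -> pad i = true -> f i = false) by (intros; apply H; auto; lia).
      apply IHn in H0. discriminate.
    + destruct IHn as [IH _]. specialize (IH eq_refl).
      destruct (pad n) eqn:Ep, (f n) eqn:Ef; simpl.
      * split; [discriminate|]. intros H. rewrite (H n) in Ef by (auto; lia). discriminate.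
      * split; [|reflexivity]. intros _ i Hi Hp. assert (i < n \/ i = n)%nat as [|] by lia; [auto|subst; auto].
      * split; [|reflexivity]. intros _ i Hi Hp. assert (i < n \/ i = n)%nat as [|] by lia; [auto|subst; congruence].
      * split; [|reflexivity]. intros _ i Hi Hp. assert (i < n \/ i = n)%nat as [|] by lia; [auto|subst; congruence].
Qed.

Lemma firstv_Some f n i : firstv f n = Some i -> (i < n)%nat /\ fv f i.
Proof.
  induction n; simpl; [discriminate|].
  destruct (firstv f n) eqn:E.
  - intros [= <-]. destruct (IHn eq_refl). split; auto; lia.
  - destruct (andb (pad n) (f n)) eqn:Ep; [|discriminate]. intros [= <-].
    apply andb_prop in Ep. destruct Ep. split; [lia|]. split; auto. split; auto.
    intros j Hj Hpj. apply firstv_None with n; auto.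
Qed.

Lemma fv_firstv f n i : fv f i -> (i < n)%nat -> firstv f n = Some i.
Proof.
  intros [H1 [H2 H3]]. induction n; intros Hi; [lia|]. simpl.
  assert (i < n \/ i = n)%nat as [Hl|He] by lia.
  - rewrite IHn; auto.
  - subst. assert (firstv f n = None) as -> by (apply firstv_None; auto). rewrite H1, H2. reflexivity.
Qed.

Lemma fv_unique f i j : fv f i -> fv f j -> i = j.
Proof.
  intros [A1 [A2 A3]] [B1 [B2 B3]].
  destruct (Nat.lt_trichotomy i j) as [H|[H|H]]; auto.
  - rewrite B3 in A2; auto. discriminate.
  - rewrite A3 in B2; auto. discriminate.
Qed.

Lemma fv_ext f g i : (forall j, (j <= i)%nat -> f j = g j) -> fv f i -> fv g i.
Proof.
  intros H [A1 [A2 A3]]. split; auto. split; [rewrite <- H; auto|].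
  intros j Hj Hp. rewrite <- H by lia. auto.
Qed.

Lemma prefix_ext (f g : cantor) n : (forall k, (k < n)%nat -> f k = g k) -> prefix f n = prefix g n.
Proof.
  intros H. unfold prefix. apply map_ext_in. intros a Ha. apply in_seq in Ha. apply H. lia.
Qed.

Lemma length_prefix f n : length (prefix f n) = n.
Proof. unfold prefix. rewrite length_map, length_seq. reflexivity. Qed.

Lemma nth_prefix f n i : (i < n)%nat -> nth i (prefix f n) false = f i.
Proof.
  intros H. unfold prefix. rewrite (nth_indep _ false (f 0%nat)) by (rewrite length_map, length_seq; auto).
  rewrite map_nth, seq_nth; auto.
Qed.

Lemma N_prefix x n y : N (prefix x n) y <-> forall i, (i < n)%nat -> y i = x i.
Proof.
  unfold N. rewrite length_prefix. split; intros H i Hi; rewrite H by auto; [apply nth_prefix| symmetry; apply nth_prefix]; auto.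
Qed.

Lemma N_prefix_self x n : N (prefix x n) x.
Proof. apply N_prefix. auto. Qed.

Definition dec (f : cantor) : cantor := fun k => f (2 ^ k - 1)%nat.

Lemma data_below k i : (k < Nat.log2 i)%nat -> (2 ^ k - 1 < i)%nat.
Proof.
  intros H. destruct i. change (Nat.log2 0) with 0 in H. lia.
  pose proof (Nat.log2_spec (S i) ltac:(lia)) as [H1 _].
  pose proof (Nat.pow_lt_mono_r 2 k (Nat.log2 (S i)) ltac:(lia) H). lia.
Qed.

Section Layout.
Variable h : list bool -> bool.

Definition val (f : cantor) (i : nat) : bool := h (prefix (dec f) (Nat.log2 i)).

Lemma val_ext f g i : (forall j, (j < i)%nat -> f j = g j) -> val f i = val g i.
Proof.
  intros H. unfold val. f_equal. apply prefix_ext. intros k Hk. unfold dec. apply H. apply data_below; auto.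
Qed.

Definition Uset (x : cantor) : Prop := exists i, fv x i /\ val x i = true.
Definition Vset (x : cantor) : Prop := exists i, fv x i /\ val x i = false.
Definition Zset (x : cantor) : Prop := forall i, pad i = true -> x i = false.

Lemma UV_disj x : Uset x -> Vset x -> False.
Proof. intros [i [Hi Hv]] [j [Hj Hw]]. rewrite (fv_unique _ _ _ Hi Hj) in Hv. congruence. Qed.
Lemma UZ_disj x : Uset x -> Zset x -> False.
Proof. intros [i [[H1 [H2 _]] _]] Hz. rewrite Hz in H2; auto. discriminate. Qed.
Lemma VZ_disj x : Vset x -> Zset x -> False.
Proof. intros [i [[H1 [H2 _]] _]] Hz. rewrite Hz in H2; auto. discriminate. Qed.

Lemma notZ_fv x : ~ Zset x -> exists i, fv x i.
Proof.
  intros Hz. apply not_all_ex_not in Hz. destruct Hz as [j Hj].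
  destruct (firstv x (S j)) eqn:E.
  - exists n. apply (firstv_Some _ _ _ E).
  - exfalso. apply Hj. intros Hp. apply (proj1 (firstv_None x (S j)) E); auto.
Qed.

Definition strf (s : list bool) : cantor := fun i => nth i s false.

Definition status (s : list bool) : option bool :=
  match firstv (strf s) (length s) with
  | None => None
  | Some i => Some (val (strf s) i)
  end.

Lemma N_strf s x : N s x -> forall i, (i < length s)%nat -> x i = strf s i.
Proof. intros H i Hi. apply H; auto. Qed.

Lemma status_Some s x v : N s x -> status s = Some v -> exists i, fv x i /\ val x i = v.
Proof.
  intros Hn. unfold status. destruct (firstv (strf s) (length s)) eqn:E; [|discriminate].
  intros [= <-]. apply firstv_Some in E. destruct E as [Hi Hfv]. exists n. split.
  - eapply fv_ext; [|exact Hfv]. intros j Hj. first [apply N_strf; auto; lia | symmetry; apply N_strf; auto; lia].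
  - apply val_ext. intros j Hj. first [apply N_strf; auto; lia | symmetry; apply N_strf; auto; lia].
Qed.

Lemma strf_snoc a b i : (i < length a)%nat -> strf (a ++ [b]) i = strf a i.
Proof. intros H. unfold strf. rewrite app_nth1; auto. Qed.

Lemma status_dead a : status a = None -> pad (length a) = true -> exists v, status (a ++ [true]) = Some v.
Proof.
  unfold status. intros H Hp. destruct (firstv (strf a) (length a)) eqn:E; [discriminate|].
  rewrite length_app. simpl. rewrite Nat.add_1_r. simpl.
  rewrite (firstv_ext _ (strf a)) by (intros; apply strf_snoc; auto). rewrite E.
  unfold strf. rewrite app_nth2 by lia. rewrite Nat.sub_diag. simpl. rewrite Hp. simpl. eauto.
Qed.

Open Scope R_scope.
Fixpoint cov (want : bool) (a : list bool) (D : nat) : list (list bool) :=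
  match status a with
  | Some v => if Bool.eqb v want then [a] else []
  | None => match D with
            | O => [a]
            | S D => cov want (a ++ [false]) D ++ cov want (a ++ [true]) D
            end
  end.

Fixpoint np (n D : nat) : nat :=
  match D with O => O | S D => ((if pad n then 1 else 0) + np (S n) D)%nat end.

Lemma np_add n D1 D2 : np n (D1 + D2) = (np n D1 + np (n + D1) D2)%nat.
Proof.
  revert n. induction D1; intros n; simpl. rewrite Nat.add_0_r; auto.
  rewrite IHD1. replace (S n + D1)%nat with (n + S D1)%nat by lia. lia.
Qed.

Lemma np_grow m n : exists D, (m <= np n D)%nat.
Proof.
  revert n. induction m; intros n. exists O; lia.
  destruct (pad_exists n) as [p [Hp1 Hp2]].
  destruct (IHm (n + (p - n + 1))%nat) as [D2 HD2].
  exists (p - n + 1 + D2)%nat. rewrite np_add, np_add.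
  replace (n + (p - n))%nat with p by lia. simpl. rewrite Hp2. lia.
Qed.

Lemma W_some a D v : status a = Some v -> wsum (cov true a D) + wsum (cov false a D) = w a.
Proof. intros H. destruct D; simpl; rewrite H; destruct v; simpl; ring. Qed.

Lemma W_bound D a : wsum (cov true a D) + wsum (cov false a D) <= w a * (1 + (/2) ^ (np (length a) D)).
Proof.
  revert a. induction D; intros a.
  - simpl. destruct (status a) eqn:E.
    + destruct b; simpl; pose proof (w_pos a); lra.
    + simpl. lra.
  - destruct (status a) eqn:E.
    + rewrite (W_some a (S D) b E). pose proof (w_pos a). pose proof (pow_lt (/2) (np (length a) (S D)) ltac:(lra)). nra.
    + simpl. rewrite E. rewrite !wsum_app.
      pose proof (IHD (a ++ [false])) as H0. pose proof (IHD (a ++ [true])) as H1.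
      rewrite length_app, Nat.add_1_r in H0, H1. rewrite !w_snoc in H0, H1.
      destruct (pad (length a)) eqn:Ep.
      * destruct (status_dead a E Ep) as [v Hv]. pose proof (W_some _ D v Hv) as HW. rewrite w_snoc in HW. simpl. nra.
      * simpl. pose proof (w_pos a). nra.
Qed.

Lemma N_snoc a x : N a x -> N (a ++ [x (length a)]) x.
Proof.
  intros H i Hi. rewrite length_app in Hi. simpl in Hi.
  assert (i < length a \/ i = length a)%nat as [Hl|He] by lia.
  - rewrite app_nth1; auto.
  - subst. rewrite app_nth2, Nat.sub_diag by lia. reflexivity.
Qed.

Lemma cov_covers want D a x : N a x -> (forall i, fv x i -> val x i = want) -> exists s, In s (cov want a D) /\ N s x.
Proof.
  revert a. induction D; intros a Ha Hw.
  - simpl. destruct (status a) eqn:E.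
    + destruct (status_Some a x b Ha E) as [i [Hi Hv]]. rewrite Hw in Hv by auto. subst.
      rewrite Bool.eqb_reflx. exists a. simpl. auto.
    + exists a. simpl. auto.
  - simpl. destruct (status a) eqn:E.
    + destruct (status_Some a x b Ha E) as [i [Hi Hv]]. rewrite Hw in Hv by auto. subst.
      rewrite Bool.eqb_reflx. exists a. simpl. auto.
    + destruct (IHD (a ++ [x (length a)]) (N_snoc a x Ha) Hw) as [s [Hs1 Hs2]].
      exists s. split; auto. apply in_or_app. destruct (x (length a)); auto.
Qed.

Lemma half_pow_small e : 0 < e -> exists m, (/2) ^ m < e.
Proof.
  intros He. destruct (pow_lt_1_zero (/2) ltac:(rewrite Rabs_right; lra) e He) as [m Hm].
  exists m. specialize (Hm m (le_n _)). rewrite Rabs_right in Hm; auto. left; apply pow_lt; lra.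
Qed.

Lemma measurable_mid (B : cset) : (forall x, Uset x -> B x) -> (forall x, B x -> ~ Vset x) -> measurable B.
Proof.
  intros HU HV. apply meas_crit. intros a e He.
  destruct (half_pow_small e He) as [m Hm].
  destruct (np_grow m (length a)) as [D HD].
  exists (cov true a D), (cov false a D). split; [|split].
  - intros x Ha Hb. apply cov_covers; auto. intros i Hi. destruct (val x i) eqn:E; auto.
    exfalso. apply (HV x Hb). exists i; auto.
  - intros x Ha Hb. apply cov_covers; auto. intros i Hi. destruct (val x i) eqn:E; auto.
    exfalso. apply Hb, HU. exists i; auto.
  - eapply Rle_trans; [apply W_bound|].
    pose proof (half_pow_anti _ _ HD). pose proof (w_pos a).
    assert (w a <= 1) by (unfold w; rewrite <- (pow1 (length a)); apply pow_incr; lra).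
    assert (0 < (/2) ^ np (length a) D) by (apply pow_lt; lra). nra.
Qed.
End Layout.

Open Scope R_scope.
Open Scope nat_scope.

Lemma log2_bounds n : 1 <= n -> 2 ^ Nat.log2 n <= n < 2 ^ S (Nat.log2 n).
Proof. intros H. apply Nat.log2_spec. lia. Qed.

Lemma pow2_SS K : 2 ^ S (S K) = 2 * 2 ^ S K.
Proof. apply Nat.pow_succ_r'. Qed.

Lemma data_window K n j : 2 ^ K <= n -> n <= j -> j < 2 ^ S (S K) - 1 -> pad j = false -> j = 2 ^ S K - 1.
Proof.
  intros H1 H2 H3 H4. pose proof (data_char j H4) as Hj.
  set (m := Nat.log2 (S j)) in *.
  assert (K < m). { apply (Nat.pow_lt_mono_r_iff 2); [lia|]. lia. }
  assert (m < S (S K)). { apply (Nat.pow_lt_mono_r_iff 2); [lia|]. lia. }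
  assert (m = S K) by lia. rewrite H5 in Hj. lia.
Qed.

Lemma log2_ge n K : 2 ^ K <= n -> K <= Nat.log2 n.
Proof. intros H. apply Nat.log2_le_pow2; [|auto]. pose proof (pow2_pos K). lia. Qed.

Lemma log2_lt n K : 1 <= n -> n < 2 ^ K -> Nat.log2 n < K.
Proof. intros H1 H2. apply Nat.log2_lt_pow2; auto. Qed.

Section Density.
Variable h : list bool -> bool.
Hypothesis Hconst : forall x, exists K0, forall k, K0 <= k -> h (prefix x k) = h (prefix x K0).

Definition hlim (x : cantor) : Prop := exists K0, forall k, K0 <= k -> h (prefix x k) = true.
Definition Bset (x : cantor) : Prop := Uset h x \/ (Zset x /\ hlim (dec x)).

Definition Sbad (y : cantor) (K : nat) : cset :=
  fun w => forall j, j < 2 ^ S (S K) - 1 -> j <> 2 ^ S K - 1 -> w j = y j.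

Lemma decided y n w : Zset y -> 1 <= n -> N (prefix y n) w -> ~ Sbad y (Nat.log2 n) w ->
  exists i, fv w i /\ val h w i = h (prefix (dec y) (Nat.log2 i)) /\
            Nat.log2 n <= Nat.log2 i /\ Nat.log2 i <= S (Nat.log2 n).
Proof.
  intros Hz Hn Hw Hs. set (K := Nat.log2 n) in *.
  pose proof (log2_bounds n Hn) as [HK1 HK2]. fold K in HK1, HK2.
  pose proof (proj1 (N_prefix y n w) Hw) as Hw2. clear Hw. rename Hw2 into Hw.
  unfold Sbad in Hs. apply not_all_ex_not in Hs. destruct Hs as [j Hj].
  apply imply_to_and in Hj. destruct Hj as [Hj1 Hj]. apply imply_to_and in Hj. destruct Hj as [Hj2 Hj3].
  assert (Hjn : n <= j). { destruct (Nat.lt_ge_cases j n); auto. exfalso. apply Hj3, Hw; auto. }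
  assert (Hpj : pad j = true).
  { destruct (pad j) eqn:E; auto. exfalso. apply Hj2. eapply data_window; eauto; lia. }
  assert (Hwj : w j = true). { rewrite (Hz j Hpj) in Hj3. destruct (w j); auto. }
  destruct (firstv w (S j)) eqn:E.
  2:{ exfalso. rewrite (proj1 (firstv_None w (S j)) E j) in Hwj; auto. discriminate. }
  apply firstv_Some in E. destruct E as [Hi Hfv]. exists n0. split; auto.
  assert (Hin : n <= n0).
  { destruct (Nat.lt_ge_cases n0 n); auto. exfalso. destruct Hfv as [H1 [H2 _]].
    rewrite Hw in H2 by auto. rewrite Hz in H2; auto. discriminate. }
  assert (HK : K <= Nat.log2 n0) by (apply log2_ge; lia).
  assert (HK' : Nat.log2 n0 <= S K).
  { assert (Nat.log2 n0 < S (S K)) by (apply log2_lt; [lia|]; rewrite pow2_SS in *; lia). lia. }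
  split; [|split; auto].
  unfold val. f_equal. apply prefix_ext. intros k Hk. unfold dec. apply Hw.
  assert (2 ^ k <= 2 ^ K) by (apply Nat.pow_le_mono_r; lia). pose proof (pow2_pos k). lia.
Qed.

Open Scope R_scope.
Definition upd (y : cantor) (p : nat) (b : bool) : cantor := fun j => if Nat.eqb j p then b else y j.

Lemma mu_Sbad y K : mu (Sbad y K) <= 2 * (/2) ^ (2 ^ S (S K) - 1)%nat.
Proof.
  set (L := (2 ^ S (S K) - 1)%nat). set (p := (2 ^ S K - 1)%nat).
  assert (HpL : (p < L)%nat). { unfold p, L. rewrite pow2_SS. pose proof (pow2_pos (S K)). lia. }
  eapply Rle_trans.
  - apply (mu_list _ [prefix (upd y p false) L; prefix (upd y p true) L]).
    intros x Hx. exists (prefix (upd y p (x p)) L). split.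
    + destruct (x p); simpl; auto.
    + apply (proj2 (N_prefix _ _ _)). intros i Hi. unfold upd. destruct (Nat.eqb i p) eqn:E.
      * apply Nat.eqb_eq in E. subst. reflexivity.
      * apply Nat.eqb_neq in E. apply Hx; auto.
  - simpl. unfold w. rewrite !length_prefix. lra.
Qed.

Definition ratio (X : cset) (t : list bool) : R := mu (inter X (N t)) / mu (N t).

Lemma ratio_hi X t (S : cset) (d : R) : (forall w, N t w -> ~ X w -> S w) -> (mu S <= d)%R ->
  (1 - d / w t <= ratio X t <= 1)%R.
Proof.
  intros HS Hd. unfold ratio. rewrite mu_N. pose proof (w_pos t).
  assert (mu (inter X (N t)) <= w t)%R by (rewrite <- mu_N; apply mu_mono; intros x [_ Hx]; auto).
  assert (w t <= mu (inter X (N t)) + d)%R.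
  { rewrite <- mu_N. eapply Rle_trans; [|apply Rplus_le_compat_l; apply Hd].
    eapply Rle_trans; [|apply mu_union]. apply mu_mono. intros x Hx.
    destruct (classic (X x)); [left; split; auto| right; auto]. }
  split.
  - apply Rle_trans with ((w t - d) / w t)%R; [right; field; lra|].
    apply Rmult_le_compat_r; [left; apply Rinv_0_lt_compat; auto| lra].
  - apply Rle_trans with (w t / w t)%R; [|right; field; lra].
    apply Rmult_le_compat_r; [left; apply Rinv_0_lt_compat; auto| lra].
Qed.

Lemma ratio_lo X t (S : cset) (d : R) : (forall w, N t w -> X w -> S w) -> (mu S <= d)%R ->
  (0 <= ratio X t <= d / w t)%R.
Proof.
  intros HS Hd. unfold ratio. rewrite mu_N. pose proof (w_pos t).
  assert (mu (inter X (N t)) <= d)%R by (eapply Rle_trans; [apply mu_mono|apply Hd]; intros x [H1 H2]; auto).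
  split.
  - apply Rmult_le_pos; [apply mu_nonneg| left; apply Rinv_0_lt_compat; auto].
  - apply Rmult_le_compat_r; [left; apply Rinv_0_lt_compat; auto| lra].
Qed.

Lemma err_bound n : (1 <= n)%nat -> 2 * (/2) ^ (2 ^ S (S (Nat.log2 n)) - 1)%nat / (/2) ^ n <= (/2) ^ (Nat.log2 n).
Proof.
  intros Hn. set (K := Nat.log2 n). pose proof (log2_bounds n Hn) as [H1 H2]. fold K in H1, H2.
  set (L := (2 ^ S (S K) - 1)%nat).
  assert (HL : (n + S (S K) <= L)%nat).
  { unfold L. rewrite pow2_SS. pose proof (Nat.pow_gt_lin_r 2 (S K) ltac:(lia)). lia. }
  assert (Hp : ((/2) ^ L <= (/2) ^ n * (/2) ^ (S (S K)))%R).
  { rewrite <- pow_add. apply half_pow_anti. lia. }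
  assert (0 < (/2) ^ n)%R by (apply pow_lt; lra).
  apply Rle_trans with (2 * ((/2) ^ n * (/2) ^ (S (S K))) / (/2) ^ n)%R.
  - unfold Rdiv. apply Rmult_le_compat_r; [left; apply Rinv_0_lt_compat; auto| lra].
  - replace (2 * ((/2) ^ n * (/2) ^ (S (S K))) / (/2) ^ n)%R with ((/2) ^ (S K))%R.
    + apply half_pow_anti. lia.
    + simpl. field. lra.
Qed.

Lemma ratio_prefix_w y n : w (prefix y n) = (/2) ^ n.
Proof. unfold w. rewrite length_prefix. reflexivity. Qed.

Lemma Un_cv_from (u : nat -> R) (l : R) (K0 : nat) :
  (forall n, (1 <= n)%nat -> (K0 <= Nat.log2 n)%nat -> Rabs (u n - l) <= (/2) ^ (Nat.log2 n)) -> Un_cv u l.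
Proof.
  intros H e He. destruct (half_pow_small e He) as [m Hm].
  exists (2 ^ (Nat.max K0 m))%nat. intros n Hn. unfold R_dist.
  pose proof (pow2_pos (Nat.max K0 m)).
  assert (HL : (Nat.max K0 m <= Nat.log2 n)%nat) by (apply log2_ge; lia).
  eapply Rle_lt_trans; [apply H; lia|].
  eapply Rle_lt_trans; [apply half_pow_anti|exact Hm]. lia.
Qed.

Lemma density_mid (X : cset) : (forall x, Uset h x -> X x) -> (forall x, X x -> ~ Vset h x) ->
  forall y, (Bset y -> density X y 1) /\ (~ Bset y -> density X y 0).
Proof.
  intros HU HV y. destruct (classic (Zset y)) as [Hz|Hz].
  - destruct (Hconst (dec y)) as [K0 HK0]. set (c := h (prefix (dec y) K0)).
    assert (Hdec : forall n w, (1 <= n)%nat -> (K0 <= Nat.log2 n)%nat -> N (prefix y n) w ->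
              ~ Sbad y (Nat.log2 n) w -> exists i, fv w i /\ val h w i = c).
    { intros n w Hn HK Hw Hs. destruct (decided y n w Hz Hn Hw Hs) as [i [Hi [Hv [H1 H2]]]].
      exists i. split; auto. rewrite Hv. apply HK0. lia. }
    assert (HB : Bset y <-> c = true).
    { split.
      - intros [Hu|[_ [K1 HK1]]]. { exfalso; eapply UZ_disj; eauto. }
        unfold c. rewrite <- (HK0 (Nat.max K0 K1)) by lia. apply HK1. lia.
      - intros Hc. right. split; auto. exists K0. intros k Hk. rewrite HK0; auto. }
    split; intros Hb.
    + assert (Hc : c = true) by (apply HB; auto).
      apply (Un_cv_from _ _ K0). intros n Hn HK.
      destruct (ratio_hi X (prefix y n) (Sbad y (Nat.log2 n)) (2 * (/2) ^ (2 ^ S (S (Nat.log2 n)) - 1)%nat)) as [R1 R2]; [| apply mu_Sbad |].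
      * intros w Hw HX. apply NNPP. intros Hs. apply HX. destruct (Hdec n w Hn HK Hw Hs) as [i [Hi Hv]].
        apply HU. exists i. split; auto. congruence.
      * pose proof (err_bound n Hn). rewrite ratio_prefix_w in R1. unfold ratio in R1, R2.
        rewrite Rabs_left1 by lra. lra.
    + assert (Hc : c = false) by (destruct c; auto; exfalso; apply Hb, HB; auto).
      apply (Un_cv_from _ _ K0). intros n Hn HK.
      destruct (ratio_lo X (prefix y n) (Sbad y (Nat.log2 n)) (2 * (/2) ^ (2 ^ S (S (Nat.log2 n)) - 1)%nat)) as [R1 R2]; [| apply mu_Sbad |].
      * intros w Hw HX. apply NNPP. intros Hs. destruct (Hdec n w Hn HK Hw Hs) as [i [Hi Hv]].
        apply (HV w HX). exists i. split; auto. congruence.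
      * pose proof (err_bound n Hn). rewrite ratio_prefix_w in R2. unfold ratio in R1, R2.
        rewrite Rminus_0_r, Rabs_right by lra. lra.
  - destruct (notZ_fv y Hz) as [i Hi]. set (v := val h y i).
    assert (Hall : forall n w, (S i <= n)%nat -> N (prefix y n) w -> fv w i /\ val h w i = v).
    { intros n w Hn Hw. pose proof (proj1 (N_prefix y n w) Hw) as Hw'. split.
      - eapply fv_ext; [|exact Hi]. intros j Hj. symmetry. apply Hw'. lia.
      - unfold v. apply val_ext. intros j Hj. apply Hw'. lia. }
    assert (HB : Bset y <-> v = true).
    { split.
      - intros [[j [Hj Hv]]|[Hz' _]]; [|contradiction]. assert (i = j) by (eapply fv_unique; eauto). subst j. auto.
      - intros Hv. left. exists i. auto. }
    assert (Hmu : forall n, mu (N (prefix y n)) = (/2) ^ n) by (intros; rewrite mu_N; apply ratio_prefix_w).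
    split; intros Hb.
    + assert (Hv : v = true) by (apply HB; auto).
      intros e He. exists (S i). intros n Hn. unfold R_dist.
      assert (mu (inter X (N (prefix y n))) = mu (N (prefix y n))) as ->.
      { apply mu_ext. intros w. split; [intros [_ H]; auto|]. intros Hw. split; auto.
        apply HU. exists i. destruct (Hall n w Hn Hw). split; auto. congruence. }
      rewrite Hmu. assert (0 < (/2) ^ n) by (apply pow_lt; lra).
      replace ((/2) ^ n / (/2) ^ n - 1) with 0 by (field; lra). rewrite Rabs_R0. lra.
    + assert (Hv : v = false) by (destruct v; auto; exfalso; apply Hb, HB; auto).
      intros e He. exists (S i). intros n Hn. unfold R_dist.
      rewrite (mu_empty (inter X (N (prefix y n)))).
      * unfold Rdiv. rewrite Rmult_0_l, Rminus_0_r, Rabs_R0. lra.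
      * intros w [HX Hw]. apply (HV w HX). exists i. destruct (Hall n w Hn Hw). split; auto. congruence.
Qed.
End Density.

Open Scope nat_scope.

Lemma least_exists (P : nat -> Prop) : (exists j, P j) -> exists j, P j /\ forall i, i < j -> ~ P i.
Proof.
  intros [j Hj]. revert Hj. induction j using (well_founded_induction Wf_nat.lt_wf). intros Hj.
  destruct (classic (exists i, i < j /\ P i)) as [[i [Hi1 Hi2]]|Hn].
  - apply (H i Hi1 Hi2).
  - exists j. split; auto. intros i Hi HP. apply Hn. eauto.
Qed.

Lemma least_unique (P : nat -> Prop) j1 j2 : P j1 -> (forall i, i < j1 -> ~ P i) -> P j2 -> (forall i, i < j2 -> ~ P i) -> j1 = j2.
Proof.
  intros H1 H1' H2 H2'. destruct (Nat.lt_trichotomy j1 j2) as [H|[H|H]]; auto.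
  - exfalso; eapply H2'; eauto.
  - exfalso; eapply H1'; eauto.
Qed.

Lemma N_mono x m k y : m <= k -> N (prefix x k) y -> N (prefix x m) y.
Proof.
  intros H Hy. apply (proj2 (N_prefix _ _ _)). intros i Hi. apply (proj1 (N_prefix _ _ _) Hy). lia.
Qed.

Lemma h_exists (A : cset) : Delta02 A -> exists (h : list bool -> bool) (wit : list bool -> cantor),
  (forall x, exists K0, forall k, K0 <= k -> h (prefix x k) = h (prefix x K0)) /\
  (forall x, A x <-> hlim h x) /\
  (forall t, N t (wit t) /\ (A (wit t) <-> h t = true)).
Proof.
  intros [[F [HF1 HF2]] [G [HG1 HG2]]].
  set (GG := fun j => if Nat.even j then F (Nat.div2 j) else compl (G (Nat.div2 j))).
  assert (HGc : forall j, closed (GG j)).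
  { intros j. unfold GG. destruct (Nat.even j); auto.
    intros x Hx. assert (G (Nat.div2 j) x) by (apply NNPP; auto).
    destruct (HG1 _ x H) as [n Hn]. exists n. intros y Hy Hc. apply Hc. auto. }
  assert (HGA : forall j x, GG j x -> (A x <-> Nat.even j = true)).
  { intros j x. unfold GG. destruct (Nat.even j); intros H.
    - split; auto. intros _. apply HF2. eauto.
    - split; [|discriminate]. intros Ha. exfalso. apply H. apply HG2. auto. }
  assert (HGcov : forall x, exists j, GG j x).
  { intros x. destruct (classic (A x)) as [Ha|Ha].
    - destruct (proj1 (HF2 x) Ha) as [k Hk]. exists (2 * k). unfold GG.
      rewrite Nat.even_mul, Nat.div2_double. simpl. auto.
    - assert (exists k, ~ G k x) as [k Hk].
      { apply not_all_ex_not. intros H. apply Ha, HG2, H. }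
      exists (S (2 * k)). unfold GG. rewrite Nat.even_succ, Nat.odd_mul, Nat.div2_succ_double. simpl. auto. }
  set (meets := fun t j => exists z, N t z /\ GG j z).
  set (least := fun t j => meets t j /\ forall i, i < j -> ~ meets t i).
  assert (Hlex : forall t, exists j, least t j).
  { intros t. apply least_exists. destruct (HGcov (strf t)) as [j Hj]. exists j, (strf t). split; auto.
    intros i Hi. reflexivity. }
  set (leastj := fun t => epsilon (inhabits 0) (least t)).
  assert (Hleast : forall t, least t (leastj t)) by (intros; apply epsilon_spec, Hlex).
  set (h := fun t => Nat.even (leastj t)).
  assert (Hwex : forall t, exists z, N t z /\ GG (leastj t) z) by (intros t; apply (Hleast t)).
  set (wit := fun t => epsilon (inhabits (fun _ : nat => false)) (fun z => N t z /\ GG (leastj t) z)).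
  assert (Hwit : forall t, N t (wit t) /\ GG (leastj t) (wit t)) by (intros; apply epsilon_spec, Hwex).
  assert (Hstab : forall x, exists j0 K0, GG j0 x /\ (forall i, i < j0 -> ~ GG i x) /\
             forall k, K0 <= k -> leastj (prefix x k) = j0).
  { intros x. destruct (least_exists (fun j => GG j x) (HGcov x)) as [j0 [Hj0 Hj0']].
    assert (HM : forall m, m <= j0 -> exists M, forall i k y, i < m -> M <= k -> N (prefix x k) y -> ~ GG i y).
    { induction m; intros Hm.
      - exists 0. intros; lia.
      - destruct IHm as [M HM]; [lia|].
        destruct (HGc m x (Hj0' m ltac:(lia))) as [M' HM'].
        exists (Nat.max M M'). intros i k y Hi Hk Hy.
        assert (i < m \/ i = m) as [Hl|He] by lia.
        + apply (HM i k y Hl); [lia|exact Hy].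
        + subst. apply HM'. eapply N_mono; [|exact Hy]. lia. }
    destruct (HM j0 (le_n _)) as [M HMM].
    exists j0, M. split; auto. split; auto. intros k Hk.
    symmetry. apply (least_unique (meets (prefix x k))).
    - exists x. split; auto. apply N_prefix_self.
    - intros i Hi [z [Hz1 Hz2]]. eapply HMM; eauto.
    - apply Hleast.
    - apply Hleast. }
  exists h, wit. split; [|split].
  - intros x. destruct (Hstab x) as [j0 [K0 [_ [_ H]]]]. exists K0. intros k Hk. unfold h. rewrite !H; auto.
  - intros x. destruct (Hstab x) as [j0 [K0 [H1 [_ H3]]]]. rewrite (HGA j0 x H1). unfold hlim, h. split.
    + intros He. exists K0. intros k Hk. rewrite H3; auto.
    + intros [K1 HK1]. rewrite <- (H3 (Nat.max K0 K1)) by lia. apply HK1. lia.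
  - intros t. destruct (Hwit t) as [H1 H2]. split; auto. apply (HGA _ _ H2).
Qed.

Open Scope nat_scope.

Section Assembly.
Variable A : cset.
Variable h : list bool -> bool.
Variable wit : list bool -> cantor.
Hypothesis Hconst : forall x, exists K0, forall k, K0 <= k -> h (prefix x k) = h (prefix x K0).
Hypothesis HA : forall x, A x <-> hlim h x.
Hypothesis Hwit : forall t, N t (wit t) /\ (A (wit t) <-> h t = true).

Definition fvi (y : cantor) : nat := epsilon (inhabits 0) (fun i => fv y i).

Lemma fvi_spec y : ~ Zset y -> fv y (fvi y).
Proof. intros H. unfold fvi. apply epsilon_spec. apply notZ_fv; auto. Qed.

Definition fred (y : cantor) : cantor :=
  if excluded_middle_informative (Zset y) then dec y else wit (prefix (dec y) (Nat.log2 (fvi y))).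

Definition enc (x : cantor) : cantor := fun j => if pad j then false else x (Nat.log2 (S j)).

Lemma B_notZ y : ~ Zset y -> (Bset h y <-> val h y (fvi y) = true).
Proof.
  intros Hz. pose proof (fvi_spec y Hz) as Hf. split.
  - intros [[j [Hj Hv]]|[Hz' _]]; [|contradiction]. rewrite (fv_unique _ _ _ Hf Hj). auto.
  - intros Hv. left. exists (fvi y). auto.
Qed.

Lemma B_Z y : Zset y -> (Bset h y <-> A (dec y)).
Proof.
  intros Hz. rewrite HA. split.
  - intros [Hu|[_ H]]; auto. exfalso; eapply UZ_disj; eauto.
  - intros H. right. auto.
Qed.

Lemma fred_cont : continuous fred.
Proof.
  intros x n. destruct (classic (Zset x)) as [Hz|Hz].
  - exists (2 ^ n). intros y Hy i Hi.
    assert (Hd : dec y i = dec x i).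
    { unfold dec. apply Hy. pose proof (Nat.pow_lt_mono_r 2 i n ltac:(lia) Hi). lia. }
    unfold fred. destruct (excluded_middle_informative (Zset x)); [|contradiction].
    destruct (excluded_middle_informative (Zset y)); auto.
    pose proof (fvi_spec y n0) as Hf. set (i0 := fvi y) in *.
    assert (Hi0 : 2 ^ n <= i0).
    { destruct (Nat.lt_ge_cases i0 (2 ^ n)); auto. exfalso. destruct Hf as [H1 [H2 _]].
      rewrite Hy in H2 by auto. rewrite Hz in H2; auto. discriminate. }
    assert (n <= Nat.log2 i0) by (apply log2_ge; auto).
    destruct (Hwit (prefix (dec y) (Nat.log2 i0))) as [HN _].
    rewrite (proj1 (N_prefix _ _ _) HN) by lia. auto.
  - pose proof (fvi_spec x Hz) as Hf. exists (S (fvi x)). intros y Hy i Hi.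
    assert (Hfy : fv y (fvi x)) by (eapply fv_ext; [|exact Hf]; intros j Hj; symmetry; apply Hy; lia).
    assert (Hzy : ~ Zset y). { intros Hzy. destruct Hfy as [H1 [H2 _]]. rewrite Hzy in H2; auto. discriminate. }
    assert (fvi y = fvi x) by (eapply fv_unique; [apply fvi_spec; auto| exact Hfy]).
    unfold fred. destruct (excluded_middle_informative (Zset x)); [contradiction|].
    destruct (excluded_middle_informative (Zset y)); [contradiction|].
    rewrite H. replace (prefix (dec y) (Nat.log2 (fvi x))) with (prefix (dec x) (Nat.log2 (fvi x))); [reflexivity|].
    apply prefix_ext. intros k Hk. unfold dec. symmetry. apply Hy.
    pose proof (data_below k (fvi x) Hk). lia.
Qed.

Lemma fred_red y : Bset h y <-> A (fred y).
Proof.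
  unfold fred. destruct (excluded_middle_informative (Zset y)) as [Hz|Hz].
  - apply B_Z; auto.
  - rewrite B_notZ by auto. rewrite (proj2 (Hwit _)). reflexivity.
Qed.

Lemma enc_cont : continuous enc.
Proof.
  intros x n. exists n. intros y Hy i Hi. unfold enc. destruct (pad i); auto.
  apply Hy. pose proof (Nat.log2_lt_lin (S i) ltac:(lia)). lia.
Qed.

Lemma enc_red x : A x <-> Bset h (enc x).
Proof.
  assert (Hz : Zset (enc x)) by (intros j Hj; unfold enc; rewrite Hj; auto).
  rewrite B_Z by auto. assert (dec (enc x) = x) as -> ; [|tauto].
  apply functional_extensionality. intros k. unfold dec, enc. rewrite data_pos.
  pose proof (pow2_pos k). replace (S (2 ^ k - 1)) with (2 ^ k) by lia. rewrite Nat.log2_pow2 by lia; reflexivity.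
Qed.

Lemma density_unique X y : density X y 0 -> density X y 1 -> False.
Proof. intros H0 H1. pose proof (UL_sequence _ _ _ H0 H1). lra. Qed.

Lemma main_assembly : exists B : cset, wadge_eq B A /\ dualistic B /\
    exists C U : cset, closed C /\ open U /\
      set_eq B (Phi C) /\ set_eq B (Phi U).
Proof.
  exists (Bset h). split; [split|split].
  - exists fred. split; [apply fred_cont| apply fred_red].
  - exists enc. split; [apply enc_cont| apply enc_red].
  - split.
    + apply (measurable_mid h). { intros x Hx; left; auto. }
      intros x [Hu|[Hz _]] Hv; [eapply UV_disj|eapply VZ_disj]; eauto.
    + intros y. destruct (density_mid h Hconst (Bset h)) with (y := y) as [D1 D0].
      { intros x Hx; left; auto. }
      { intros x [Hu|[Hz _]] Hv; [eapply UV_disj|eapply VZ_disj]; eauto. }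
      destruct (classic (Bset h y)); [right; auto| left; auto].
  - exists (compl (Vset h)), (Uset h). split; [|split; [|split]].
    + intros x Hx. assert (Hv : Vset h x) by (apply NNPP; auto). destruct Hv as [i [Hi Hv]].
      exists (S i). intros y Hy Hc. apply Hc. exists i.
      pose proof (proj1 (N_prefix _ _ _) Hy) as Hy'. split.
      * eapply fv_ext; [|exact Hi]. intros j Hj. symmetry. apply Hy'. lia.
      * rewrite <- Hv. apply val_ext. intros j Hj. apply Hy'. lia.
    + intros x [i [Hi Hv]]. exists (S i). intros y Hy. exists i.
      pose proof (proj1 (N_prefix _ _ _) Hy) as Hy'. split.
      * eapply fv_ext; [|exact Hi]. intros j Hj. symmetry. apply Hy'. lia.
      * rewrite <- Hv. apply val_ext. intros j Hj. apply Hy'. lia.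
    + intros y. destruct (density_mid h Hconst (compl (Vset h))) with (y := y) as [D1 D0].
      { intros x Hx Hv. eapply UV_disj; eauto. }
      { intros x Hx; auto. }
      unfold Phi. split; auto. intros Hd. apply NNPP. intros Hb. eapply density_unique; eauto.
    + intros y. destruct (density_mid h Hconst (Uset h)) with (y := y) as [D1 D0].
      { intros x Hx; auto. }
      { intros x Hx Hv. eapply UV_disj; eauto. }
      unfold Phi. split; auto. intros Hd. apply NNPP. intros Hb. eapply density_unique; eauto.
Qed.
End Assembly.

Theorem theorem5p3 : forall A : cset, Delta02 A ->
  exists B : cset, wadge_eq B A /\ dualistic B /\
    exists C U : cset, closed C /\ open U /\
      set_eq B (Phi C) /\ set_eq B (Phi U).
Proof.
  intros A HA. destruct (h_exists A HA) as [h [wit [H1 [H2 H3]]]].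
  apply (main_assembly A h wit); auto.
Qed.
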